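(* Let $\mathcal{X},\mathcal{Y},\mathcal{U},\mathcal{Z}$ be finite sets, let $(X,Y)\in\mathcal{X}\times\mathcal{Y}$ have a joint distribution $P_{X,Y}$ of full support on $\mathcal{X}\times\mathcal{Y}$, and let $f:\mathcal{X}\times\mathcal{Y}\to\mathcal{U}$, $g:\mathcal{Y}\to\mathcal{Z}$ be deterministic. Define $j:\mathcal{X}\times\mathcal{Z}\to\mathcal{U}^*$ by $j(x,z)=(f(x,y'))_{y'\in g^{-1}(z)}$ (the word listing the values $f(x,y')$ over $y'\in g^{-1}(z)$ in a fixed order). Then the optimal zero-error rate is $$R^*=H\big(j(X,g(Y))\,\big|\,g(Y)\big).$$
   Context: $\mathcal{U}^*$ denotes the set of finite words over $\mathcal{U}$, and $g^{-1}(z)=\{y\in\mathcal{Y}:g(y)=z\}$. Setting: $(X^n,Y^n)$ denotes $n$ i.i.d. copies of $(X,Y)$. An encoder observes $X^n$ and $(g(Y_t))_{t\le n}$; a decoder observes $Y^n$ and must recover $(f(X_t,Y_t))_{t\le n}$. An $(n,R_n)$-zero-error source code is a pair $\phi_e:\mathcal{X}^n\times\mathcal{Z}^n\to\{0,1\}^*$, $\phi_d:\mathcal{Y}^n\times\{0,1\}^*\to\mathcal{U}^n$ such that $\phi_e(\mathcal{X}^n\times\mathcal{Z}^n)$ is prefix-free, $R_n=\frac1n\mathbb{E}[l(\phi_e(X^n,(g(Y_t))_{t\le n}))]$ ($l$ = length of a binary word), and for all $(x^n,y^n)\in\operatorname{supp}P^n_{X,Y}$, $\phi_d(y^n,\phi_e(x^n,(g(y_t))_{t\le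 n}))=(f(x_t,y_t))_{t\le n}$. A rate $R$ is achievable if some sequence of $(n,R_n)$-zero-error codes has $\lim_n R_n=R$; $R^*$ is the infimum of achievable rates. *)

(* Defs.v *)
From HB Require Import structures.
From mathcomp Require Import all_boot all_order all_algebra.
From mathcomp Require Import all_classical all_reals all_analysis.
Set Implicit Arguments. Unset Strict Implicit. Unset Printing Implicit Defensive.
Import Order.TTheory GRing.Theory Num.Theory numFieldNormedType.Exports.
Local Open Scope ring_scope.
Local Open Scope classical_set_scope.

Section Defs.
Variables (R : realType) (X Y U Z : finType).
Variables (P : X -> Y -> R) (f : X -> Y -> U) (g : Y -> Z).

Definition log2 (t : R) : R := ln t / ln 2.

Definition jfun (x : X) (z : Z) : seq U := [seq f x y | y <- enum Y & g y == z].

Definition prob (E : X -> Y -> bool) : R :=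
  \sum_(x : X) \sum_(y : Y) (if E x y then P x y else 0).

(* Conditional entropy H(W | V) (in bits) of random variables W, V defined on
   the sample space X * Y with pmf P:
   H(W|V) = - sum_{x,y} P(x,y) log2 ( P[W = W(x,y), V = V(x,y)] / P[V = V(x,y)] ). *)
Definition cond_entropy (A B : eqType) (W : X -> Y -> A) (V : X -> Y -> B) : R :=
  - \sum_(x : X) \sum_(y : Y)
      P x y * log2 (prob (fun x' y' => (W x' y' == W x y) && (V x' y' == V x y))
                    / prob (fun x' y' => V x' y' == V x y)).

Definition Pn (n : nat) (xn : n.-tuple X) (yn : n.-tuple Y) : R :=
  \prod_(i < n) P (tnth xn i) (tnth yn i).

Definition zero_error_code (n : nat)
    (enc : n.-tuple X -> n.-tuple Z -> seq bool)
    (dec : n.-tuple Y -> seq bool -> n.-tuple U) : Prop :=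
  (forall a b a' b', prefix (enc a b) (enc a' b') -> enc a b = enc a' b') /\
  (forall xn yn, 0 < Pn xn yn ->
     dec yn (enc xn (map_tuple g yn)) = [tuple f (tnth xn i) (tnth yn i) | i < n]).

Definition rate (n : nat) (enc : n.-tuple X -> n.-tuple Z -> seq bool) : R :=
  (n%:R)^-1 * \sum_(xn : n.-tuple X) \sum_(yn : n.-tuple Y)
                 Pn xn yn * (size (enc xn (map_tuple g yn)))%:R.

Definition achievable (r : R) : Prop :=
  exists (enc : forall n, n.-tuple X -> n.-tuple Z -> seq bool)
         (dec : forall n, n.-tuple Y -> seq bool -> n.-tuple U),
    (forall n, zero_error_code (enc n) (dec n)) /\
    (fun n : nat => rate (enc n)) @ \oo --> r.

Definition opt_rate : R := inf [set r : R | achievable r].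

End Defs.

(* Main.v *)
Require Import Defs.
From HB Require Import structures.
From mathcomp Require Import all_boot all_order all_algebra.
From mathcomp Require Import all_classical all_reals all_analysis.
From mathcomp Require Import zify ring lra.
Import Order.TTheory GRing.Theory Num.Theory.
Local Open Scope ring_scope.


Section Generic.
Variable R : comNzRingType.

Lemma sum_tuple_prod (T : finType) n (F : 'I_n -> T -> R) :
  \sum_(t : n.-tuple T) \prod_(i < n) F i (tnth t i) = \prod_(i < n) \sum_(x : T) F i x.
Proof.
rewrite bigA_distr_bigA /=.
rewrite (reindex (fun f : {ffun 'I_n -> T} => [tuple f i | i < n])) /=.
  apply: eq_bigr => f _; apply: eq_bigr => i _; by rewrite tnth_mktuple.
exists (fun t : n.-tuple T => [ffun i => tnth t i]) => [f _|t _].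
  by apply/ffunP => i; rewrite ffunE tnth_mktuple.
by apply: eq_from_tnth => i; rewrite tnth_mktuple ffunE.
Qed.

Lemma prod_if_forall n (T : Type) (p : 'I_n -> pred T) (F : 'I_n -> T -> R) (t : 'I_n -> T) :
  \prod_(i < n) (if p i (t i) then F i (t i) else 0) =
  if [forall i, p i (t i)] then \prod_(i < n) F i (t i) else 0.
Proof.
case: (boolP [forall i, p i (t i)]) => [/forallP H | /forallPn [i Hi]].
  by apply: eq_bigr => i _; rewrite H.
by rewrite (bigD1 i) //= (negbTE Hi) mul0r.
Qed.

Lemma sum_tuple_prod_cond (T : finType) n (p : 'I_n -> pred T) (F : 'I_n -> T -> R) :
  \sum_(t : n.-tuple T | [forall i, p i (tnth t i)]) \prod_(i < n) F i (tnth t i)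
  = \prod_(i < n) \sum_(x | p i x) F i x.
Proof.
rewrite big_mkcond /=.
transitivity (\sum_(t : n.-tuple T) \prod_(i < n)
   (if p i (tnth t i) then F i (tnth t i) else 0)).
  apply: eq_bigr => t _.
  by rewrite (@prod_if_forall n _ p F (fun i => tnth t i)).
rewrite (sum_tuple_prod _ _ (fun i x => if p i x then F i x else 0)).
by apply: eq_bigr => i _; rewrite [RHS]big_mkcond.
Qed.

Lemma sum_tuple_prod2 (T1 T2 : finType) n (G : 'I_n -> T1 -> T2 -> R) :
  \sum_(s : n.-tuple T1) \sum_(t : n.-tuple T2) \prod_(i < n) G i (tnth s i) (tnth t i)
  = \prod_(i < n) \sum_(x : T1) \sum_(y : T2) G i x y.
Proof.
rewrite -(sum_tuple_prod _ _ (fun i x => \sum_y G i x y)).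
by apply: eq_bigr => s _; rewrite (sum_tuple_prod _ _ (fun i y => G i (tnth s i) y)).
Qed.

End Generic.

Fixpoint bits (m k : nat) : seq bool :=
  if m is m'.+1 then odd k :: bits m' k./2 else [::].
Fixpoint bdecode (s : seq bool) : nat :=
  if s is b :: s' then b + (bdecode s').*2 else 0.

Lemma size_bits m k : size (bits m k) = m.
Proof. by elim: m k => //= m IH k; rewrite IH. Qed.

Lemma bitsK m k : (k < 2 ^ m)%N -> bdecode (bits m k) = k.
Proof.
elim: m k => [|m IH] k /=; first by rewrite expn0; case: k.
move=> hk; rewrite IH; first by rewrite odd_double_half.
move: hk; rewrite expnS => hk.
have e := odd_double_half k.
rewrite -muln2 in e; lia.
Qed.


Section Kraft.
Variable R : realFieldType.

Definition pfree (W : seq (seq bool)) :=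
  {in W &, forall u v, prefix u v -> u = v}.

Lemma kraft_nil (W : seq (seq bool)) : uniq W -> pfree W -> [::] \in W ->
  \sum_(w <- W) (2^-1 : R) ^+ size w <= 1.
Proof.
move=> uW pW nW.
have sub : {subset W <= [:: [::]]}.
  by move=> w wW; rewrite inE -(pW [::] w nW wW); last by case: (w).
have := uniq_leq_size uW sub.
case: W uW pW nW sub => [|w [|w' W']] //= _ _ nW _ _.
move: nW; rewrite mem_seq1 => /eqP <-.
by rewrite big_cons big_nil expr0 addr0.
Qed.

Lemma pfree_sub (W : seq (seq bool)) b : uniq W -> pfree W -> [::] \notin W ->
  let W' := [seq behead w | w <- W & head false w == b] in
  uniq W' /\ pfree W' /\
  \sum_(w <- W | head false w == b) (2^-1 : R) ^+ size w =
    2^-1 * \sum_(w <- W') (2^-1 : R) ^+ size w.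
Proof.
move=> uW pW nW W'.
have hf : forall w, w \in [seq w <- W | head false w == b] -> w = b :: behead w.
  move=> w; rewrite mem_filter => /andP [/eqP hb wW].
  by case: w hb wW nW => [|c w] /= hb wW nW; [rewrite wW in nW | rewrite hb].
have inj : {in [seq w <- W | head false w == b] &, injective behead}.
  by move=> u v hu hv e; rewrite (hf u hu) (hf v hv) e.
split; first by rewrite map_inj_in_uniq // filter_uniq.
split.
  move=> u' v' /mapP [u hu ->] /mapP [v hv ->] hp.
  congr behead; apply: pW; first by move: hu; rewrite mem_filter => /andP [].
    by move: hv; rewrite mem_filter => /andP [].
  by rewrite (hf u hu) (hf v hv) /= eqxx.
rewrite -big_filter /W' big_map mulr_sumr.
rewrite big_seq_cond [RHS]big_seq_cond.
apply: eq_bigr => w /andP [hw _].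
by rewrite {1}(hf w hw) /= exprS.
Qed.

Lemma kraft N (W : seq (seq bool)) : uniq W -> pfree W ->
  all (fun w => size w <= N)%N W ->
  \sum_(w <- W) (2^-1 : R) ^+ size w <= 1.
Proof.
elim: N W => [|N IH] W uW pW hs.
  case: W uW pW hs => [|w W] uW pW hs; first by rewrite big_nil ler01.
  apply: kraft_nil => //.
  move: hs => /= /andP [hw _]; rewrite inE; apply/orP; left.
  by rewrite eq_sym -size_eq0 -leqn0.
case: (boolP ([::] \in W)) => nW; first exact: kraft_nil.
rewrite (bigID (fun w => head false w == true)) /=.
have [u0 [p0 e0]] := pfree_sub _ false uW pW nW.
have [u1 [p1 e1]] := pfree_sub _ true uW pW nW.
have -> : \sum_(w <- W | ~~ (head false w == true)) (2^-1 : R) ^+ size w =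
          \sum_(w <- W | head false w == false) (2^-1 : R) ^+ size w.
  by apply: eq_bigl => w; case: (head false w).
rewrite e0 e1.
have hsub : forall b, all (fun w => size w <= N)%N
    [seq behead w | w <- W & head false w == b].
  move=> b; apply/allP => w /mapP [v hv ->].
  move: hv; rewrite mem_filter => /andP [_ hv].
  move/allP: hs => /(_ v hv); rewrite size_behead; lia.
have := IH _ u0 p0 (hsub false); have := IH _ u1 p1 (hsub true).
lra.
Qed.

End Kraft.

Set Implicit Arguments. Unset Strict Implicit. Unset Printing Implicit Defensive.


Section Single.
Variables (R : realType) (X Y U Z : finType).
Variables (P : X -> Y -> R) (f : X -> Y -> U) (g : Y -> Z).
Hypothesis P_pos : forall x y, 0 < P x y.

Definition PXZ x z := \sum_(y : Y) (if g y == z then P x y else 0).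
Definition PZ z := \sum_(x : X) PXZ x z.
Definition num x z := \sum_(x' : X) (if jfun f g x' z == jfun f g x z then PXZ x' z else 0).
Definition q x z := prob P (fun x' y' => (jfun f g x' (g y') == jfun f g x z) && (g y' == z))
   / prob P (fun x' y' => g y' == z).

Lemma q_def x z : q x z = num x z / PZ z.
Proof.
rewrite /q /prob /PZ /PXZ /num; congr (_ / _).
apply: eq_bigr => x' _.
case: eqP => hj.
  apply: eq_bigr => y _; case: (g y =P z) => [->|_]; last by rewrite andbF.
  by rewrite andbT hj; case: eqP.
apply: big1 => y _; case: (g y =P z) => [->|_]; last by rewrite andbF.
by rewrite andbT; case: eqP.
Qed.

Lemma PXZ_ge0 x z : 0 <= PXZ x z.
Proof. by apply: sumr_ge0 => y _; case: ifP => // _; exact: ltW. Qed.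

Lemma PZ_ge0 z : 0 <= PZ z.
Proof. by apply: sumr_ge0 => x _; exact: PXZ_ge0. Qed.

Lemma num_ge0 x z : 0 <= num x z.
Proof. by apply: sumr_ge0 => x' _; case: ifP => // _; exact: PXZ_ge0. Qed.

Lemma num_le x z : num x z <= PZ z.
Proof.
apply: ler_sum => x' _; case: ifP => // _; exact: PXZ_ge0.
Qed.

Lemma q_ge0 x z : 0 <= q x z.
Proof. by rewrite q_def divr_ge0 // ?num_ge0 ?PZ_ge0. Qed.

Lemma q_le1 x z : q x z <= 1.
Proof.
rewrite q_def; have [->|hz] := eqVneq (PZ z) 0; first by rewrite invr0 mulr0.
have hz' : 0 < PZ z by rewrite lt0r hz PZ_ge0.
by rewrite ler_pdivrMr // mul1r num_le.
Qed.

Lemma PXZ_gt0 x y : 0 < PXZ x (g y).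
Proof.
rewrite /PXZ (bigD1 y) //= eqxx; apply: lt_le_trans (P_pos x y) _; rewrite lerDl.
by apply: sumr_ge0 => y' _; case: ifP => // _; exact: ltW.
Qed.

Lemma num_gt0 x y : 0 < num x (g y).
Proof.
rewrite /num (bigD1 x) //= eqxx; apply: lt_le_trans (PXZ_gt0 x y) _; rewrite lerDl.
by apply: sumr_ge0 => x' _; case: ifP => // _; exact: PXZ_ge0.
Qed.

Lemma PZ_gt0 (x : X) y : 0 < PZ (g y).
Proof. exact: lt_le_trans (num_gt0 x y) (num_le _ _). Qed.

Lemma q_gt0 x y : 0 < q x (g y).
Proof. by rewrite q_def divr_gt0 // ?num_gt0 ?(PZ_gt0 x). Qed.

Lemma q_class x x' z : jfun f g x z = jfun f g x' z -> q x z = q x' z.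
Proof. by move=> h; rewrite /q h. Qed.

Definition r1 x z := odflt x [pick x' | jfun f g x' z == jfun f g x z].

Lemma r1_j x z : jfun f g (r1 x z) z = jfun f g x z.
Proof. by rewrite /r1; case: pickP => [x' /eqP|] //=. Qed.

Lemma r1_eq x x' z : (r1 x z == r1 x' z) = (jfun f g x z == jfun f g x' z).
Proof.
apply/eqP/eqP => [h|h]; first by rewrite -r1_j h r1_j.
have e : [pick u | jfun f g u z == jfun f g x z] = [pick u | jfun f g u z == jfun f g x' z].
  by apply: eq_pick => u; rewrite h.
rewrite /r1 e; case: pickP => //= H.
by have := H x'; rewrite eqxx.
Qed.

Lemma r1_idem x z : r1 (r1 x z) z = r1 x z.
Proof. by apply/eqP; rewrite r1_eq r1_j. Qed.

Lemma f_r1 x y : f (r1 x (g y)) y = f x y.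
Proof.
have := r1_j x (g y); rewrite /jfun => /eq_in_map h.
by apply: h; rewrite mem_filter eqxx mem_enum.
Qed.

Lemma jfun_f x x' y : jfun f g x (g y) = jfun f g x' (g y) -> f x y = f x' y.
Proof.
rewrite /jfun => /eq_in_map h.
by apply: h; rewrite mem_filter eqxx mem_enum.
Qed.

Lemma S1 z r : \sum_(x | r1 x z == r) PXZ x z / q x z <= PZ z.
Proof.
case: (boolP [exists x0, r1 x0 z == r]) => [/existsP [x0 /eqP h0]|hn]; last first.
  rewrite big_pred0 ?PZ_ge0 // => x; apply/negP => hx; move/negP: hn; apply.
  by apply/existsP; exists x.
have e : forall x, (r1 x z == r) = (jfun f g x z == jfun f g x0 z).
  by move=> x; rewrite -h0 r1_eq.
rewrite (eq_bigl _ _ e).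
have eq : forall x, jfun f g x z == jfun f g x0 z -> PXZ x z / q x z = PXZ x z / q x0 z.
  by move=> x /eqP hx; rewrite (q_class hx).
rewrite (eq_bigr _ eq) -mulr_suml.
have -> : \sum_(x | jfun f g x z == jfun f g x0 z) PXZ x z = num x0 z.
  by rewrite /num big_mkcond.
rewrite q_def.
have [->|hn] := eqVneq (num x0 z) 0; first by rewrite mul0r PZ_ge0.
have hz : 0 < PZ z by apply: lt_le_trans (num_le x0 z); rewrite lt0r hn num_ge0.
by rewrite invfM invrK mulrA mulfV // mul1r.
Qed.

Lemma S2 z : \sum_(x | r1 x z == x) q x z <= 1.
Proof.
have [hz|hz] := eqVneq (PZ z) 0.
  by rewrite big1 ?ler01 // => x _; rewrite q_def hz invr0 mulr0.
have hz' : 0 < PZ z by rewrite lt0r hz PZ_ge0.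
under eq_bigr do rewrite q_def.
rewrite -mulr_suml ler_pdivrMr // mul1r.
rewrite /PZ [X in _ <= X](partition_big (fun x => r1 x z) (fun r => r1 r z == r)) /=;
  last by move=> x _; rewrite r1_idem.
apply: ler_sum => r /eqP hr.
rewrite /num big_mkcond [X in _ <= X]big_mkcond /=; apply: ler_sum => x _.
have -> : (r1 x z == r) = (jfun f g x z == jfun f g r z) by rewrite -{1}hr r1_eq.
by [].
Qed.

End Single.


Lemma ln_prod (R : realType) n (F : 'I_n -> R) : (forall i, 0 < F i) ->
  ln (\prod_(i < n) F i) = \sum_(i < n) ln (F i).
Proof.
elim: n F => [|n IH] F hF; first by rewrite !big_ord0 ln1.
rewrite !big_ord_recr /= lnM ?posrE //; last by apply: prodr_gt0 => i _.
by rewrite IH.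
Qed.

Lemma log2_prod (R : realType) n (F : 'I_n -> R) : (forall i, 0 < F i) ->
  log2 (\prod_(i < n) F i) = \sum_(i < n) log2 (F i).
Proof. by move=> hF; rewrite /log2 ln_prod // mulr_suml. Qed.

Section Block.
Variables (R : realType) (X Y U Z : finType).
Variables (P : X -> Y -> R) (f : X -> Y -> U) (g : Y -> Z).
Hypothesis P_pos : forall x y, 0 < P x y.
Hypothesis P_sum1 : \sum_(x : X) \sum_(y : Y) P x y = 1.

Definition H := - \sum_(x : X) \sum_(y : Y) P x y * log2 (q P f g x (g y)).

Lemma H_eq : cond_entropy P (fun x y => jfun f g x (g y)) (fun _ y => g y) = H.
Proof. by []. Qed.

Lemma Pn_sum1 n : \sum_(xn : n.-tuple X) \sum_(yn : n.-tuple Y) Pn P xn yn = 1.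
Proof.
rewrite /Pn (sum_tuple_prod2 _ _ _ _ (fun i x y => P x y)).
by rewrite big1 // => i _.
Qed.

Lemma Pn_gt0 n (xn : n.-tuple X) (yn : n.-tuple Y) : 0 < Pn P xn yn.
Proof. by apply: prodr_gt0 => i _. Qed.

Lemma expect_single n (h : X -> Y -> R) (i : 'I_n) :
  \sum_(xn : n.-tuple X) \sum_(yn : n.-tuple Y) Pn P xn yn * h (tnth xn i) (tnth yn i)
  = \sum_(x : X) \sum_(y : Y) P x y * h x y.
Proof.
pose G k x y := P x y * (if k == i then h x y else 1).
have e : forall (xn : n.-tuple X) (yn : n.-tuple Y),
    Pn P xn yn * h (tnth xn i) (tnth yn i) = \prod_(k < n) G k (tnth xn k) (tnth yn k).
  move=> xn yn; rewrite /Pn /G (bigD1 i) //= [RHS](bigD1 i) //= eqxx.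
  rewrite [X in _ = _ * X](eq_bigr (fun k => P (tnth xn k) (tnth yn k))); last first.
    by move=> k /negbTE ->; rewrite mulr1.
  by rewrite mulrAC.
under eq_bigr do under eq_bigr do rewrite e.
rewrite sum_tuple_prod2 (bigD1 i) //= [X in _ * X]big1 ?mulr1.
  by apply: eq_bigr => x _; apply: eq_bigr => y _; rewrite /G eqxx.
move=> k /negbTE hk.
by rewrite /G hk; under eq_bigr do under eq_bigr do rewrite mulr1.
Qed.

Lemma expect_sum n (h : X -> Y -> R) :
  \sum_(xn : n.-tuple X) \sum_(yn : n.-tuple Y)
     Pn P xn yn * (\sum_(i < n) h (tnth xn i) (tnth yn i))
  = n%:R * \sum_(x : X) \sum_(y : Y) P x y * h x y.
Proof.
under eq_bigr do under eq_bigr do rewrite mulr_sumr.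
under eq_bigr do rewrite exchange_big /=.
rewrite exchange_big /=.
under eq_bigr do rewrite expect_single.
by rewrite sumr_const card_ord mulr_natl.
Qed.

Definition Qz n (xn : n.-tuple X) (zn : n.-tuple Z) : R :=
  \prod_(i < n) q P f g (tnth xn i) (tnth zn i).

Lemma Qz_gt0 n (xn : n.-tuple X) (yn : n.-tuple Y) : 0 < Qz xn (map_tuple g yn).
Proof. by apply: prodr_gt0 => i _; rewrite tnth_map q_gt0. Qed.

Lemma Qz_ge0 n (xn : n.-tuple X) zn : 0 <= Qz (n:=n) xn zn.
Proof. by apply: prodr_ge0 => i _; rewrite q_ge0. Qed.

Lemma Qz_le1 n (xn : n.-tuple X) zn : Qz (n:=n) xn zn <= 1.
Proof. by apply: prodr_ile1 => i _; apply/andP; split; [exact: q_ge0 | exact: q_le1]. Qed.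

Lemma log2Qz n (xn : n.-tuple X) (yn : n.-tuple Y) :
  log2 (Qz xn (map_tuple g yn)) = \sum_(i < n) log2 (q P f g (tnth xn i) (g (tnth yn i))).
Proof.
rewrite /Qz log2_prod; last by move=> i; rewrite tnth_map q_gt0.
by apply: eq_bigr => i _; rewrite tnth_map.
Qed.

Lemma ent_block n :
  \sum_(xn : n.-tuple X) \sum_(yn : n.-tuple Y)
     Pn P xn yn * (- log2 (Qz xn (map_tuple g yn))) = n%:R * H.
Proof.
under eq_bigr do under eq_bigr do rewrite log2Qz -sumrN.
rewrite (expect_sum _ (fun x y => - log2 (q P f g x (g y)))) /H.
congr (_ * _); rewrite -sumrN; apply: eq_bigr => x _.
by rewrite -sumrN; apply: eq_bigr => y _; rewrite mulrN.
Qed.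

End Block.


Section Converse.
Variables (R : realType) (X Y U Z : finType).
Variables (P : X -> Y -> R) (f : X -> Y -> U) (g : Y -> Z).
Hypothesis P_pos : forall x y, 0 < P x y.
Hypothesis P_sum1 : \sum_(x : X) \sum_(y : Y) P x y = 1.
Variable y0 : Y.
Variable n : nat.
Variables (enc : n.-tuple X -> n.-tuple Z -> seq bool) (dec : n.-tuple Y -> seq bool -> n.-tuple U).
Hypothesis code : zero_error_code P f g enc dec.

Let K xn zn : R := (2^-1) ^+ size (enc xn zn).
Let a x z := PXZ P g x z / q P f g x z.

Lemma T_bound (zn : n.-tuple Z) :
  \sum_(xn : n.-tuple X) K xn zn * \prod_(i < n) a (tnth xn i) (tnth zn i)
  <= \prod_(i < n) PZ P g (tnth zn i).
Proof.
have a_ge0 : forall x z, 0 <= a x z by move=> x z; rewrite divr_ge0 ?PXZ_ge0 ?q_ge0.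
have K_ge0 : forall xn zn, 0 <= K xn zn by move=> xn zn'; rewrite exprn_ge0.
case: (boolP [forall i, [exists y, g y == tnth zn i]]) => [/forallP hall | /forallPn [i /existsPn hi]]; last first.
  rewrite big1; first by apply: prodr_ge0 => j _; exact: PZ_ge0.
  move=> xn _; rewrite (bigD1 i) //= /a.
  have -> : PXZ P g (tnth xn i) (tnth zn i) = 0.
    by rewrite /PXZ big1 // => y _; rewrite (negbTE (hi y)).
  by rewrite mul0r mul0r mulr0.
pose ystar := [tuple odflt y0 [pick y | g y == tnth zn i] | i < n].
have hys : map_tuple g ystar = zn.
  apply: eq_from_tnth => i; rewrite tnth_map tnth_mktuple.
  case: pickP => [y /eqP //|H0].
  by have := hall i => /existsP [y hy]; rewrite H0 in hy.
pose repn (xn : n.-tuple X) := [tuple r1 f g (tnth xn i) (tnth zn i) | i < n].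
have repn_idem : forall xn, repn (repn xn) = repn xn.
  by move=> xn; apply: eq_from_tnth => i; rewrite !tnth_mktuple r1_idem.
pose s (r : n.-tuple X) := arg_min r (fun xn => repn xn == r) (fun xn => size (enc xn zn)).
have hs : forall r, repn r == r -> repn (s r) = r /\
    forall xn, repn xn == r -> (size (enc (s r) zn) <= size (enc xn zn))%N.
  move=> r hr; rewrite /s; case: arg_minnP => // u /eqP hu hmin; split => //.
apply: le_trans (_ : \sum_(xn : n.-tuple X) K (s (repn xn)) zn *
    \prod_(i < n) a (tnth xn i) (tnth zn i) <= _).
  apply: ler_sum => xn _; apply: ler_wpM2r; first by apply: prodr_ge0 => i _.
  rewrite /K; apply: ler_wiXn2l; [by []| by rewrite invf_le1 ?ler1n |].
  by apply: (hs (repn xn) _).2; rewrite ?repn_idem.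
rewrite (partition_big repn (fun r => repn r == r)) /=; last by move=> xn _; rewrite repn_idem.
apply: le_trans (_ : \sum_(r | repn r == r) K (s r) zn * \prod_(i < n) PZ P g (tnth zn i) <= _).
  apply: ler_sum => r hr.
  rewrite (eq_bigr (fun xn => K (s r) zn * \prod_(i < n) a (tnth xn i) (tnth zn i))); last first.
    by move=> xn /eqP ->.
  rewrite -mulr_sumr; apply: ler_wpM2l; first exact: K_ge0.
  have e : forall xn, (true && (repn xn == r)) =
      [forall i, r1 f g (tnth xn i) (tnth zn i) == tnth r i].
    move=> xn; apply/eqP/forallP => [<- i|h]; first by rewrite tnth_mktuple.
    by apply: eq_from_tnth => i; rewrite tnth_mktuple; exact/eqP.
  rewrite (eq_bigl _ _ e).
  rewrite (sum_tuple_prod_cond _ _ _ (fun i x => r1 f g x (tnth zn i) == tnth r i)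
             (fun i x => a x (tnth zn i))).
  apply: ler_prod => i _; apply/andP; split; first by apply: sumr_ge0 => x _.
  exact: S1.
rewrite -mulr_suml; apply: ler_piMl; first by apply: prodr_ge0 => j _; exact: PZ_ge0.
rewrite -big_filter.
set rs := [seq r <- index_enum _ | repn r == r].
rewrite -(big_map (fun r => enc (s r) zn) predT (fun w => (2^-1 : R) ^+ size w)).
set W := map _ rs.
apply: (@kraft R (\max_(w <- W) size w) W).
- rewrite map_inj_in_uniq ?filter_uniq ?index_enum_uniq //.
  move=> r r'; rewrite !mem_filter => /andP [hr _] /andP [hr' _] e.
  have [hsr _] := hs r hr; have [hsr' _] := hs r' hr'.
  apply: eq_from_tnth => i; rewrite -hsr -hsr' !tnth_mktuple.
  apply/eqP; rewrite r1_eq; apply/eqP.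
  rewrite /jfun; apply/eq_in_map => y; rewrite mem_filter mem_enum andbT => /eqP hy.
  pose yn := [tuple if k == i then y else tnth ystar k | k < n].
  have hyn : map_tuple g yn = zn.
    apply: eq_from_tnth => k; rewrite tnth_map tnth_mktuple.
    case: eqP => [->|_]; first by [].
    by have := congr1 (fun t => tnth t k) hys; rewrite tnth_map.
  have d := code.2 (s r) yn (Pn_gt0 P_pos _ _).
  have d' := code.2 (s r') yn (Pn_gt0 P_pos _ _).
  rewrite hyn in d'; rewrite hyn e d' in d.
  have := congr1 (fun t => tnth t i) d; rewrite !tnth_mktuple eqxx.
  by move=> ->.
- move=> u v /mapP [r _ ->] /mapP [r' _ ->] hp; exact: code.1 _ _ _ _ hp.
- by apply/allP => w hw; apply: leq_bigmax_seq.
Qed.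


Lemma PZ_sum1 : \sum_(z : Z) PZ P g z = 1.
Proof.
rewrite /PZ /PXZ exchange_big /= -P_sum1; apply: eq_bigr => x _.
rewrite exchange_big /=; apply: eq_bigr => y _.
rewrite -big_mkcond /= (big_pred1 (g y)) // => z; rewrite /= eq_sym.
Qed.

Lemma tuple_eq_forall (T1 T2 : eqType) (h : T1 -> T2) (yn : n.-tuple T1) (zn : n.-tuple T2) :
  (map_tuple h yn == zn) = [forall i, h (tnth yn i) == tnth zn i].
Proof.
apply/eqP/forallP => [<- i|H0]; first by rewrite tnth_map.
by apply: eq_from_tnth => i; rewrite tnth_map; exact/eqP.
Qed.

Lemma KS : \sum_(xn : n.-tuple X) \sum_(yn : n.-tuple Y)
   Pn P xn yn * (K xn (map_tuple g yn) / Qz P f g xn (map_tuple g yn)) <= 1.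
Proof.
pose w x y := P x y / q P f g x (g y).
have e1 : forall (xn : n.-tuple X) (yn : n.-tuple Y),
    Pn P xn yn * (K xn (map_tuple g yn) / Qz P f g xn (map_tuple g yn)) =
    K xn (map_tuple g yn) * \prod_(i < n) w (tnth xn i) (tnth yn i).
  move=> xn yn; rewrite mulrCA; congr (_ * _).
  rewrite /w prodf_div /Pn /Qz; congr (_ / _).
  by apply: eq_bigr => i _; rewrite tnth_map.
under eq_bigr do under eq_bigr do rewrite e1.
have e2 : forall xn : n.-tuple X,
    \sum_(yn : n.-tuple Y) K xn (map_tuple g yn) * \prod_(i < n) w (tnth xn i) (tnth yn i)
    = \sum_(zn : n.-tuple Z) K xn zn * \prod_(i < n) a (tnth xn i) (tnth zn i).
  move=> xn.
  rewrite (partition_big (fun yn : n.-tuple Y => map_tuple g yn) predT) //=.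
  apply: eq_bigr => zn _.
  rewrite (eq_bigr (fun yn => K xn zn * \prod_(i < n) w (tnth xn i) (tnth yn i))); last first.
    by move=> yn /eqP ->.
  rewrite -mulr_sumr; congr (_ * _).
  rewrite (eq_bigl _ _ (fun yn => tuple_eq_forall g yn zn)).
  rewrite (sum_tuple_prod_cond _ _ _ (fun i y => g y == tnth zn i)
             (fun i y => w (tnth xn i) y)).
  apply: eq_bigr => i _; rewrite /a /PXZ big_mkcond /= mulr_suml.
  apply: eq_bigr => y _; rewrite /w; case: eqP => [->|_] //.
  by rewrite mul0r.
under eq_bigr do rewrite e2.
rewrite exchange_big /=.
apply: le_trans (_ : \sum_(zn : n.-tuple Z) \prod_(i < n) PZ P g (tnth zn i) <= _).
  by apply: ler_sum => zn _; apply: T_bound.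
rewrite (sum_tuple_prod _ _ _ (fun i z => PZ P g z)).
by rewrite big1 // => i _; rewrite PZ_sum1.
Qed.

Lemma converse : n%:R * H P f g <=
  \sum_(xn : n.-tuple X) \sum_(yn : n.-tuple Y) Pn P xn yn * (size (enc xn (map_tuple g yn)))%:R.
Proof.
rewrite -(ent_block f g P_pos P_sum1).
have l2 : 0 < ln (2 : R) by apply: ln_gt0; rewrite ltr1n.
pose t xn yn := K xn (map_tuple g yn) / Qz P f g xn (map_tuple g yn).
have HH : \sum_(xn : n.-tuple X) \sum_(yn : n.-tuple Y)
     Pn P xn yn * (- log2 (Qz P f g xn (map_tuple g yn))) <=
  \sum_(xn : n.-tuple X) \sum_(yn : n.-tuple Y)
   (Pn P xn yn * (size (enc xn (map_tuple g yn)))%:R +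
    (Pn P xn yn * t xn yn - Pn P xn yn) / ln (2 : R)).
  apply: ler_sum => xn _; apply: ler_sum => yn _.
  have hQ := Qz_gt0 f g P_pos xn yn.
  have hK : 0 < K xn (map_tuple g yn) by rewrite /K exprn_gt0 // invr_gt0.
  have ht : 0 < t xn yn by rewrite /t divr_gt0.
  have hPn := Pn_gt0 P_pos xn yn.
  have key : - ln (Qz P f g xn (map_tuple g yn)) <=
      (size (enc xn (map_tuple g yn)))%:R * ln (2:R) + (t xn yn - 1).
    have : ln (t xn yn) <= t xn yn - 1.
      have := @le_ln1Dx R (t xn yn - 1); rewrite addrCA subrr addr0; apply.
      lra.
    rewrite /t ln_div ?posrE // /K lnXn ?invr_gt0 // lnV ?posrE //.
    rewrite mulNrn -mulr_natl.
    move=> h; lra.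
  have E1 : Pn P xn yn * (size (enc xn (map_tuple g yn)))%:R +
      (Pn P xn yn * t xn yn - Pn P xn yn) / ln (2 : R) =
      Pn P xn yn / ln (2 : R) * ((size (enc xn (map_tuple g yn)))%:R * ln (2:R) + (t xn yn - 1)).
    by field; rewrite gt_eqF.
  have E2 : Pn P xn yn * - log2 (Qz P f g xn (map_tuple g yn)) =
      Pn P xn yn / ln (2 : R) * - ln (Qz P f g xn (map_tuple g yn)).
    by rewrite /log2; field; rewrite gt_eqF.
  rewrite E1 E2; apply: ler_wpM2l => //.
  by rewrite divr_ge0 // ltW.
apply: le_trans HH _.
have E3 : \sum_(xn : n.-tuple X) \sum_(yn : n.-tuple Y)
   (Pn P xn yn * (size (enc xn (map_tuple g yn)))%:R +
    (Pn P xn yn * t xn yn - Pn P xn yn) / ln (2 : R)) =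
  \sum_(xn : n.-tuple X) \sum_(yn : n.-tuple Y) Pn P xn yn * (size (enc xn (map_tuple g yn)))%:R
  + (\sum_(xn : n.-tuple X) \sum_(yn : n.-tuple Y) Pn P xn yn * t xn yn -
     \sum_(xn : n.-tuple X) \sum_(yn : n.-tuple Y) Pn P xn yn) / ln (2 : R).
  rewrite -sumrB mulr_suml -big_split; apply: eq_bigr => xn _.
  by rewrite -sumrB mulr_suml -big_split.
rewrite E3 Pn_sum1 // gerDl.
rewrite pmulr_lle0 ?invr_gt0 // subr_le0.
exact: KS.
Qed.

End Converse.


Lemma pow_le_Q (R : realType) (Q : R) (l : nat) : 0 < Q -> - log2 Q <= l%:R ->
  (2^-1 : R) ^+ l <= Q.
Proof.
move=> hQ h.
have l2 : 0 < ln (2 : R) by apply: ln_gt0; rewrite ltr1n.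
have e : ln ((2^-1 : R) ^+ l) = - (l%:R * ln (2:R)).
  by rewrite lnXn ?invr_gt0 // lnV ?posrE // mulNrn mulr_natl.
rewrite -ler_ln ?posrE ?exprn_gt0 ?invr_gt0 // e.
move: h; rewrite /log2 -mulNr ler_pdivrMr //; lra.
Qed.

Section Achieve.
Variables (R : realType) (X Y U Z : finType).
Variables (P : X -> Y -> R) (f : X -> Y -> U) (g : Y -> Z).
Hypothesis P_pos : forall x y, 0 < P x y.
Hypothesis P_sum1 : \sum_(x : X) \sum_(y : Y) P x y = 1.
Variable x0 : X.
Variable c : nat.
Hypothesis hc : forall x y, - log2 (q P f g x (g y)) <= c%:R.
Variable n : nat.

Definition Nn := (n * c).+1.
Definition bn := (trunc_log 2 Nn).+1.
Definition repn (xn : n.-tuple X) (zn : n.-tuple Z) : n.-tuple X :=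
  [tuple r1 f g (tnth xn i) (tnth zn i) | i < n].
Definition ell (xn : n.-tuple X) (zn : n.-tuple Z) : nat :=
  minn (Num.trunc (- log2 (Qz P f g xn zn))).+1 Nn.
Definition Apred (zn : n.-tuple Z) (l : nat) : pred (n.-tuple X) :=
  [pred r | (repn r zn == r) && ((2^-1 : R) ^+ l <= Qz P f g r zn)].
Definition Aset zn l := enum (Apred zn l).
Definition encA (xn : n.-tuple X) (zn : n.-tuple Z) : seq bool :=
  bits bn (ell xn zn) ++ bits (ell xn zn) (index (repn xn zn) (Aset zn (ell xn zn))).
Definition decA (yn : n.-tuple Y) (w : seq bool) : n.-tuple U :=
  let zn := map_tuple g yn in
  let l := bdecode (take bn w) in
  let r := nth [tuple x0 | _ < n] (Aset zn l) (bdecode (take l (drop bn w))) in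
  [tuple f (tnth r i) (tnth yn i) | i < n].

Lemma repn_idem xn zn : repn (repn xn zn) zn = repn xn zn.
Proof. by apply: eq_from_tnth => i; rewrite !tnth_mktuple r1_idem. Qed.

Lemma Qz_rep xn zn : Qz P f g (repn xn zn) zn = Qz P f g xn zn.
Proof.
apply: eq_bigr => i _; rewrite tnth_mktuple.
by apply: q_class; rewrite r1_j.
Qed.

Lemma ell_lt xn zn : (ell xn zn < 2 ^ bn)%N.
Proof.
apply: leq_ltn_trans (geq_minr _ _) _.
exact: trunc_log_ltn.
Qed.

Lemma encA_pfree a b a' b' : prefix (encA a b) (encA a' b') -> encA a b = encA a' b'.
Proof.
rewrite /encA prefix_catr ?size_bits // => /andP [/eqP hb hp].
have hl : ell a b = ell a' b'.
  by rewrite -(bitsK _ _ (ell_lt a b)) hb (bitsK _ _ (ell_lt a' b')).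
rewrite hb; congr (_ ++ _).
move: hp; rewrite prefixE size_bits hl take_oversize ?size_bits // => /eqP.
by move=> ->.
Qed.

Lemma repn_forall (r : n.-tuple X) zn :
  (repn r zn == r) = [forall i, r1 f g (tnth r i) (tnth zn i) == tnth r i].
Proof.
apply/eqP/forallP => [<- i|h]; first by rewrite tnth_mktuple r1_idem.
by apply: eq_from_tnth => i; rewrite tnth_mktuple; exact/eqP.
Qed.

Lemma sum_reps zn : \sum_(r : n.-tuple X | repn r zn == r) Qz P f g r zn <= 1.
Proof.
rewrite (eq_bigl _ _ (fun r => repn_forall r zn)).
rewrite (sum_tuple_prod_cond _ _ _ (fun i x => r1 f g x (tnth zn i) == x)
             (fun i x => q P f g x (tnth zn i))).
apply: prodr_ile1 => i _; apply/andP; split; first by apply: sumr_ge0 => x _; apply: q_ge0.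
exact: S2.
Qed.

Lemma size_Aset zn l : (size (Aset zn l) <= 2 ^ l)%N.
Proof.
rewrite /Aset -cardE.
have h : (2^-1 : R) ^+ l *+ #|Apred zn l| <= 1.
  rewrite -sumr_const; apply: le_trans _ (sum_reps zn).
  rewrite [X in _ <= X]big_mkcond [X in X <= _]big_mkcond /=.
  apply: ler_sum => r _; rewrite /Apred inE.
  case: ifP => [/andP [-> h] //|_].
  by case: ifP => // _; apply: Qz_ge0.
rewrite -(ler_nat R) natrX.
move: h; rewrite exprVn -mulr_natr mulrC ler_pdivrMr ?exprn_gt0 // mul1r.
by [].
Qed.


Lemma negl2_le (xn : n.-tuple X) (yn : n.-tuple Y) :
  - log2 (Qz P f g xn (map_tuple g yn)) <= (n * c)%:R.
Proof.
rewrite (log2Qz f g P_pos) -sumrN.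
apply: (@le_trans _ _ (\sum_(i < n) (c%:R : R))).
  by apply: ler_sum => i _; apply: hc.
by rewrite sumr_const card_ord natrM mulr_natl.
Qed.

Lemma v_nonneg (xn : n.-tuple X) (zn : n.-tuple Z) : 0 <= - log2 (Qz P f g xn zn).
Proof.
have l2 : 0 < ln (2 : R) by apply: ln_gt0; rewrite ltr1n.
rewrite /log2 -mulNr divr_ge0 ?oppr_ge0 ?ln_le0 ?(Qz_le1 f g P_pos) //.
exact: ltW.
Qed.

Lemma ell_le_v (xn : n.-tuple X) (zn : n.-tuple Z) : (ell xn zn)%:R <= - log2 (Qz P f g xn zn) + 1.
Proof.
apply: (@le_trans _ _ ((Num.trunc (- log2 (Qz P f g xn zn))).+1)%:R).
  by rewrite ler_nat geq_minl.
by rewrite -addn1 natrD lerD2r truncn_le v_nonneg.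
Qed.

Lemma v_le_ell (xn : n.-tuple X) (yn : n.-tuple Y) :
  - log2 (Qz P f g xn (map_tuple g yn)) <= (ell xn (map_tuple g yn))%:R.
Proof.
rewrite /ell /minn; case: ltnP => _; first exact: ltW (truncnS_gt _).
apply: le_trans (negl2_le xn yn) _.
by rewrite ler_nat /Nn.
Qed.

Lemma decA_ok (xn : n.-tuple X) (yn : n.-tuple Y) :
  decA yn (encA xn (map_tuple g yn)) = [tuple f (tnth xn i) (tnth yn i) | i < n].
Proof.
have rA : repn xn (map_tuple g yn) \in Aset (map_tuple g yn) (ell xn (map_tuple g yn)).
  rewrite /Aset mem_enum /Apred inE repn_idem eqxx /= Qz_rep.
  apply: pow_le_Q; first exact: Qz_gt0.
  exact: v_le_ell.
have kA : (index (repn xn (map_tuple g yn)) (Aset (map_tuple g yn) (ell xn (map_tuple g yn)))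
    < 2 ^ (ell xn (map_tuple g yn)))%N.
  by apply: leq_trans _ (size_Aset (map_tuple g yn) _); rewrite index_mem.
rewrite /decA /encA; cbv zeta.
rewrite take_size_cat ?size_bits // (bitsK _ _ (ell_lt xn _)).
rewrite drop_size_cat ?size_bits // take_oversize ?size_bits //.
rewrite (bitsK _ _ kA) nth_index //.
apply: eq_from_tnth => i; rewrite !tnth_mktuple tnth_map.
exact: f_r1.
Qed.

Lemma code_ok : zero_error_code P f g encA decA.
Proof. by split; [exact: encA_pfree | move=> xn yn _; exact: decA_ok]. Qed.

Lemma sum_size : \sum_(xn : n.-tuple X) \sum_(yn : n.-tuple Y)
    Pn P xn yn * (size (encA xn (map_tuple g yn)))%:R <= bn%:R + 1 + n%:R * H P f g.
Proof.
rewrite -(ent_block f g P_pos P_sum1 n).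
apply: (@le_trans _ _ (\sum_(xn : n.-tuple X) \sum_(yn : n.-tuple Y)
   (Pn P xn yn * (bn%:R + 1) + Pn P xn yn * (- log2 (Qz P f g xn (map_tuple g yn)))))).
  apply: ler_sum => xn _; apply: ler_sum => yn _.
  rewrite size_cat size_bits natrD -mulrDr; apply: ler_wpM2l; first exact: ltW (Pn_gt0 P_pos _ _).
  have := ell_le_v xn (map_tuple g yn); rewrite size_bits; lra.
have E : \sum_(xn : n.-tuple X) \sum_(yn : n.-tuple Y)
   (Pn P xn yn * (bn%:R + 1) + Pn P xn yn * (- log2 (Qz P f g xn (map_tuple g yn)))) =
   (\sum_(xn : n.-tuple X) \sum_(yn : n.-tuple Y) Pn P xn yn) * (bn%:R + 1) +
   \sum_(xn : n.-tuple X) \sum_(yn : n.-tuple Y) Pn P xn yn * (- log2 (Qz P f g xn (map_tuple g yn))).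
  rewrite mulr_suml -big_split; apply: eq_bigr => xn _.
  by rewrite mulr_suml -big_split /=; apply: eq_bigr => yn _; rewrite mulrC.
by rewrite E (Pn_sum1 P_sum1) mul1r.
Qed.

End Achieve.

Unset Implicit Arguments. Set Strict Implicit.


Lemma sq_le_pow4 k : ((k + 4) ^ 2 <= 2 ^ (k + 4))%N.
Proof.
elim: k => [//|k IH].
rewrite addSn (expnS 2 (k + 4)); move: IH; set t := (2 ^ (k + 4))%N; nia.

Qed.

Lemma sq_le_pow s : (s ^ 2 <= 2 ^ s + 16)%N.
Proof.
case: (leqP 4 s) => hs.
  have := sq_le_pow4 (s - 4); rewrite subnK //; lia.
have : (s ^ 2 <= 3 ^ 2)%N by rewrite leq_exp2r //; lia.
lia.
Qed.

Lemma bn_sq c n : (0 < n)%N -> ((bn c n).+1 ^ 2 <= n * (4 * c + 20))%N.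
Proof.
move=> n0; rewrite /bn.
set m := trunc_log 2 (Nn c n).
have hm : (2 ^ m <= Nn c n)%N by apply: trunc_logP.
have := sq_le_pow m.+2; rewrite !expnS.
move: hm; rewrite /Nn; set t := (2 ^ m)%N; nia.
Qed.

Theorem theorem3 (R : realType) (X Y U Z : finType)
  (P : X -> Y -> R) (f : X -> Y -> U) (g : Y -> Z)
  (P_pos : forall x y, 0 < P x y)
  (P_sum1 : \sum_(x : X) \sum_(y : Y) P x y = 1) :
  opt_rate P f g =
  cond_entropy P (fun x y => jfun f g x (g y)) (fun _ y => g y).
Proof.
rewrite H_eq.
have [x0 _] : exists x : X, true.
  case: (pickP (@predT X)) => [x _|H0]; first by exists x.
  move: P_sum1; rewrite big1 => [/eqP|x _]; first by rewrite eq_sym oner_eq0.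
  by have := H0 x.
have [y0 _] : exists y : Y, true.
  case: (pickP (@predT Y)) => [y _|H0]; first by exists y.
  move: P_sum1; rewrite big1 => [/eqP|x _]; first by rewrite eq_sym oner_eq0.
  by apply: big1 => y _; have := H0 y.
pose c := (\max_(p : X * Y) (Num.trunc (- log2 (q P f g p.1 (g p.2)))).+1)%N.
have hc : forall x y, - log2 (q P f g x (g y)) <= c%:R.
  move=> x y; apply: le_trans (ltW (truncnS_gt _)) _.
  rewrite ler_nat /c.
  have := @leq_bigmax _ (fun p : X * Y => (Num.trunc (- log2 (q P f g p.1 (g p.2)))).+1) (x, y).
  move=> h; exact: h.
have lowr : forall n (enc : n.-tuple X -> n.-tuple Z -> seq bool) dec,
    zero_error_code P f g enc dec -> (0 < n)%N -> H P f g <= rate P g enc.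
  move=> n enc dec hcode n0.
  have := converse P_pos P_sum1 y0 hcode.
  rewrite /rate; set S := \sum_(xn : n.-tuple X) _.
  have hn : 0 < (n%:R : R) by rewrite ltr0n.
  move=> h; rewrite -(ler_pM2l hn) mulrA mulfV ?gt_eqF // mul1r //.
have hach : achievable P f g (H P f g).
{   exists (fun n => encA P f g c (n:=n)), (fun n => decA P f g x0 c (n:=n)).
  split; first by move=> n; exact: code_ok.
  apply/cvgrPdist_le => e e0.
  near=> n.
  have n1 : (0 < n)%N by near: n; exact: nbhs_infty_gt.
  have nC : ((4 * c + 20)%:R : R) / (e ^+ 2) <= n%:R by near: n; exact: nbhs_infty_ger.
  have hn : 0 < (n%:R : R) by rewrite ltr0n.
  have lo := lowr n _ _ (code_ok P_pos x0 hc n) n1.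
  have up := sum_size f g P_pos P_sum1 c n.
  have hsq : ((bn c n).+1%:R : R) ^+ 2 <= n%:R * (4 * c + 20)%:R.
    by rewrite -natrX -natrM ler_nat bn_sq.
  have hb : ((bn c n).+1%:R : R) <= e * n%:R.
    move: nC; rewrite ler_pdivrMr ?exprn_gt0 // => nC.
    have s0 : 0 <= ((bn c n).+1%:R : R) by [].
    have h2 : ((bn c n).+1%:R : R) ^+ 2 <= (e * n%:R) ^+ 2.
      apply: le_trans hsq _; rewrite exprMn !expr2.
      have := ler_wpM2l (ltW hn) nC; lra.
    move: h2; rewrite ler_pXn2r // nnegrE //.
    by rewrite mulr_ge0 // ltW.
  move: lo up hb; rewrite /rate.
  set S := \sum_(xn : n.-tuple X) _ => lo up hb.
  have up' : n%:R^-1 * S <= n%:R^-1 * ((bn c n).+1)%:R + H P f g.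
    rewrite -(ler_pM2l hn) mulrDr !mulrA mulfV ?gt_eqF // !mul1r.
    by move: up; rewrite -addn1 natrD.
  have hb' : n%:R^-1 * ((bn c n).+1)%:R <= e.
    by rewrite mulrC ler_pdivrMr // mulrC.
  rewrite ler_norml; apply/andP; split; lra.
  Unshelve. all: by end_near. }
have lb : lbound [set r : R | achievable P f g r] (H P f g).
{   move=> r [enc [dec [hcode hcvg]]].
  rewrite leNgt; apply/negP => hr.
  have e0 : 0 < (H P f g - r) / 2 by rewrite divr_gt0 // subr_gt0.
  move/cvgrPdist_le : hcvg => /(_ _ e0) hnear.
  near \oo%classic => n.
  have h1 : `|r - rate P g (enc n)| <= (H P f g - r) / 2 by near: n.
  have h2 : (0 < n)%N by near: n; exact: nbhs_infty_gt.
  have := lowr n (enc n) (dec n) (hcode n) h2.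
  move: h1; rewrite ler_norml; lra.
  Unshelve. all: by end_near. }
apply/eqP; rewrite eq_le; apply/andP; split.
  by apply: (ge_inf _ hach); exists (H P f g).
by apply: lb_le_inf => //; exists (H P f g).
Qed.
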